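(* Let $m\ge2$, $n\ge1$, $f_i:\mathbb{R}^n\to\mathbb{R}$ ($i=1,\dots,m$) smooth, $\mathbf{r}\in\mathbb{R}^n$, and $\mathcal{G}$ an undirected graph on $\{1,\dots,m\}$ with Laplacian $\mathbf{L}$. Assume each $f_i$ has $L^g_{f_i}$-Lipschitz gradient and $L^H_{f_i}$-Lipschitz Hessian, each $f_i$ is coercive, and $\mathcal{G}$ is connected. Let $L_F^g=\max_iL^g_{f_i}$. Let $\boldsymbol\theta^0\in\mathbb{R}^{mn}$ satisfy $(\mathbf{1}_m^\top\otimes\mathbf{I}_n)\boldsymbol\theta^0=\mathbf{r}$. Then for any fixed step-size $0<\alpha\le\frac{1}{\|\sqrt{\mathbf{L}}\|^2L_F^g}$, the sequence generated by $\boldsymbol\theta^{k+1}=\boldsymbol\theta^k-\alpha\hat{\mathbf{L}}\nabla F(\boldsymbol\theta^k)$ satisfies $(\mathbf{1}_m^\top\otimes\mathbf{I}_n)\boldsymbol\theta^k=\mathbf{r}$ for all $k\ge0$ and $$\lim_{k\to\infty}\|\sqrt{\hat{\mathbf{L}}}\,\nabla F(\boldsymbol\theta^k)\|=0.$$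
   Context: $\boldsymbol\theta=[\boldsymbol\theta_1^\top,\dots,\boldsymbol\theta_m^\top]^\top\in\mathbb{R}^{mn}$, $F(\boldsymbol\theta)=\sum_i f_i(\boldsymbol\theta_i)$, $\nabla F$ the stacked gradient. $\sqrt{\mathbf{L}}$ is the unique symmetric positive semidefinite square root of $\mathbf{L}$; $\hat{\mathbf{L}}=\mathbf{L}\otimes\mathbf{I}_n$, $\sqrt{\hat{\mathbf{L}}}=\sqrt{\mathbf{L}}\otimes\mathbf{I}_n$; $\|\cdot\|$ on matrices is the spectral norm. *)

(* Defs.v *)
From HB Require Import structures.
From mathcomp Require Import all_boot all_order all_algebra.
From mathcomp Require Import all_classical all_reals all_analysis.
Set Implicit Arguments. Unset Strict Implicit. Unset Printing Implicit Defensive.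
Import Order.TTheory GRing.Theory Num.Theory.
Import numFieldNormedType.Exports.
Local Open Scope ring_scope.
Local Open Scope classical_set_scope.

Section Defs.
Variable R : realType.

(* Euclidean norm of a row vector (the library norm on 'rV is the sup norm). *)
Definition enorm (n : nat) (v : 'rV[R]_n) : R :=
  Num.sqrt (\sum_(j < n) v 0 j ^+ 2).

(* Frobenius norm of an m x n matrix = Euclidean norm of the stacked vector in R^{mn}. *)
Definition fnorm (m n : nat) (A : 'M[R]_(m, n)) : R :=
  Num.sqrt (\sum_(i < m) \sum_(j < n) A i j ^+ 2).

Definition specnorm (n : nat) (A : 'M[R]_n) : R :=
  sup [set enorm (v *m A) | v in [set v : 'rV[R]_n | enorm v <= 1]].

Definition evec (n : nat) (j : 'I_n) : 'rV[R]_n := delta_mx 0 j.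

Definition iterD (n : nat) (vs : seq 'rV[R]_n) (f : 'rV[R]_n -> R) : 'rV[R]_n -> R :=
  foldr (fun v g => 'D_v g) f vs.

Definition smooth (n : nat) (f : 'rV[R]_n -> R) : Prop :=
  forall (vs : seq 'rV[R]_n) (x : 'rV[R]_n), differentiable (iterD vs f) x.

Definition grad (n : nat) (f : 'rV[R]_n -> R) (x : 'rV[R]_n) : 'rV[R]_n :=
  \row_j ('D_(evec j) f) x.

Definition hessian (n : nat) (f : 'rV[R]_n -> R) (x : 'rV[R]_n) : 'M[R]_n :=
  \matrix_(i, j) ('D_(evec j) ('D_(evec i) f)) x.

Definition grad_lipschitz (n : nat) (f : 'rV[R]_n -> R) (Lg : R) : Prop :=
  forall x y, enorm (grad f x - grad f y) <= Lg * enorm (x - y).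

Definition hessian_lipschitz (n : nat) (f : 'rV[R]_n -> R) (LH : R) : Prop :=
  forall x y, specnorm (hessian f x - hessian f y) <= LH * enorm (x - y).

Definition coercive (n : nat) (f : 'rV[R]_n -> R) : Prop :=
  forall M : R, exists r : R, forall x, r <= enorm x -> M <= f x.

Definition undirected_graph (m : nat) (e : rel 'I_m) : Prop :=
  symmetric e /\ irreflexive e.

Definition connected_graph (m : nat) (e : rel 'I_m) : Prop :=
  forall i j, connect e i j.

Definition laplacian (m : nat) (e : rel 'I_m) : 'M[R]_m :=
  \matrix_(i, j) (if i == j then (#|[set k | e i k]|)%:R else - (e i j)%:R).

Definition stacked_grad (m n : nat) (f : 'I_m -> 'rV[R]_n -> R)
  (Th : 'M[R]_(m, n)) : 'M[R]_(m, n) :=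
  \matrix_(i, j) grad (f i) (row i Th) 0 j.

(* (1_m^T (x) I_n) theta = sum of the blocks theta_i. *)
Definition block_sum (m n : nat) (Th : 'M[R]_(m, n)) : 'rV[R]_n :=
  const_mx 1 *m Th.

End Defs.

(* Main.v *)
Require Import Defs.
From HB Require Import structures.
From mathcomp Require Import all_boot all_order all_algebra.
From mathcomp Require Import all_classical all_reals all_analysis.
From mathcomp Require Import ring lra.
Set Implicit Arguments. Unset Strict Implicit. Unset Printing Implicit Defensive.
Import Order.TTheory GRing.Theory Num.Theory.
Import numFieldNormedType.Exports.
Local Open Scope ring_scope.
Local Open Scope classical_set_scope.
Section S.
Variable R : realType.

Lemma quad_bound (phi dphi : R -> R) (c : R) :
  phi 0 = 0 -> (forall t : R, is_derive t 1 phi (dphi t)) ->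
  (forall t : R, 0 < t < 1 -> dphi t <= c * t) -> phi 1 <= c / 2.
Proof.
move=> phi0 dph hb.
pose q := (fun t : R => c / 2 * (t * t)).
have dq : forall t : R, is_derive t 1 q (c * t).
  move=> t.
  have dm : is_derive t (1:R) (fun t : R => t * t) (t *: 1 + t *: 1).
    exact: (@is_deriveM _ _ id id t 1 1 1).
  have H := @is_deriveZ _ _ _ (fun t : R => t * t) (c/2) t 1 _ dm.
  have -> : q = (c/2) \*: (fun t : R => t * t) by apply/funext => s.
  apply: is_derive_eq H _.
  rewrite /GRing.scale /=. 
  by rewrite !mulr1 -mulr2n mulr2n mulrDr -mulrDl -splitr.
have dh : forall s : R, is_derive s 1 (phi - q) (dphi s - c * s).
  by move=> s; exact: (is_deriveB (dph s) (dq s)).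
have cont : {within `[0, 1], continuous (phi - q)}.
  apply: continuous_subspaceT => x.
  apply: differentiable_continuous.
  apply/derivable1_diffP.
  exact: (@ex_derive _ _ _ _ _ _ _ (dh x)).
have [x x01 Heq] := @MVT R (phi - q) (fun t => dphi t - c * t) 0 1 ltr01 (fun t _ => dh t) cont.
have {Heq} : phi 1 - q 1 - (phi 0 - q 0) = (dphi x - c * x) * (1 - 0) := Heq.
rewrite /q phi0 !mul0r !mulr0 !mulr1 subr0 subr0 => Heq.
have : dphi x - c * x <= 0.
  rewrite subr_le0; apply: hb.
  by move: x01; rewrite in_itv /=.
lra.
Qed.
Definition dot n (u v : 'rV[R]_n) : R := \sum_j u 0 j * v 0 j.

Lemma line_derive n (f : 'rV[R]_n -> R) x d (t : R) :
  derivable f (x + t *: d) d ->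
  is_derive t 1 (fun s : R => f (x + s *: d)) ('D_d f (x + t *: d)).
Proof.
have E : (fun h : R => h^-1 *: (((fun s : R => f (x + s *: d)) \o shift t) (h *: 1)
             - (fun s : R => f (x + s *: d)) t)) =
         (fun h : R => h^-1 *: ((f \o shift (x + t *: d)) (h *: d) - f (x + t *: d))).
  apply/funext => h /=; congr (_ *: (f _ - _)).
  by rewrite scalerDl addrCA [h%:A]mulr1.
move=> df; split; rewrite /derivable /derive; by rewrite E.
Qed.

Lemma Dgrad n (f : 'rV[R]_n -> R) p d :
  differentiable f p -> 'D_d f p = dot (grad f p) d.
Proof.
move=> df; rewrite deriveE //.
rewrite [in LHS](row_sum_delta d) linear_sum /dot.
apply: eq_bigr => j _; rewrite linearZ /= mxE -deriveE // /evec.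
by rewrite /GRing.scale /= mulrC.
Qed.
Definition esq n (v : 'rV[R]_n) : R := \sum_j v 0 j ^+ 2.

Lemma esq_ge0 n (v : 'rV[R]_n) : 0 <= esq v.
Proof. by apply: sumr_ge0 => j _; rewrite sqr_ge0. Qed.

Lemma enormE n (v : 'rV[R]_n) : enorm v = Num.sqrt (esq v).
Proof. by []. Qed.

Lemma enorm_ge0 n (v : 'rV[R]_n) : 0 <= enorm v.
Proof. exact: sqrtr_ge0. Qed.

Lemma enorm_sqr n (v : 'rV[R]_n) : enorm v ^+ 2 = esq v.
Proof. by rewrite enormE sqr_sqrtr // esq_ge0. Qed.

Lemma esq_expand n (u v : 'rV[R]_n) (t : R) :
  esq (u - t *: v) = esq u - (2 * t) * dot u v + t ^+ 2 * esq v.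
Proof.
rewrite /esq /dot !mulr_sumr -sumrN -!big_split /=.
by apply: eq_bigr => j _; rewrite !mxE; ring.
Qed.

Lemma CS2 n (u v : 'rV[R]_n) : dot u v ^+ 2 <= esq u * esq v.
Proof.
have hv := esq_ge0 v; have hu := esq_ge0 u.
have [C0|Cpos] := eqVneq (esq v) 0.
  have v0 : forall j, v 0 j = 0.
    move=> j; apply/eqP; rewrite -sqrf_eq0; apply/eqP.
    by apply: (psumr_eq0P _ C0) => // k _; rewrite sqr_ge0.
  have -> : dot u v = 0 by rewrite /dot big1 // => j _; rewrite v0 mulr0.
  by rewrite C0 mulr0 expr2 mulr0.
have Cp : 0 < esq v by rewrite lt_def Cpos hv.
set B := dot u v; set A := esq u; set C := esq v.
have h := esq_ge0 (u - (B / C) *: v); rewrite esq_expand -/A -/B -/C in h.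
have e : B / C * C = B by rewrite divfK.
have e2 : (B / C) ^+ 2 * C = B / C * B by rewrite expr2 -mulrA e.
have h2 : 0 <= A - B / C * B by move: h; rewrite e2; lra.
have h3 : 0 <= (A - B / C * B) * C by apply: mulr_ge0 => //; exact: ltW.
have e3 : B / C * B * C = B ^+ 2 by rewrite mulrAC e expr2.
move: h3; rewrite mulrBl e3; lra.
Qed.

Lemma CS n (u v : 'rV[R]_n) : `|dot u v| <= enorm u * enorm v.
Proof.
rewrite !enormE -sqrtrM ?esq_ge0 // -sqrtr_sqr.
by apply: ler_wsqrtr; apply: CS2.
Qed.

Lemma esqZ n (v : 'rV[R]_n) (t : R) : esq (t *: v) = t ^+ 2 * esq v.
Proof. by rewrite /esq mulr_sumr; apply: eq_bigr => j _; rewrite mxE exprMn. Qed.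

Lemma enormZ n (v : 'rV[R]_n) (t : R) : enorm (t *: v) = `|t| * enorm v.
Proof. by rewrite !enormE esqZ sqrtrM ?sqr_ge0 // sqrtr_sqr. Qed.

Lemma dotBl n (a b d : 'rV[R]_n) : dot (a - b) d = dot a d - dot b d.
Proof. by rewrite /dot -sumrB; apply: eq_bigr => j _; rewrite !mxE mulrBl. Qed.
Lemma descent n (f : 'rV[R]_n -> R) (L : R) x d :
  (forall p, differentiable f p) -> grad_lipschitz f L ->
  `| f (x + d) - f x - dot (grad f x) d | <= L / 2 * esq d.
Proof.
move=> df gl.
set c0 := dot (grad f x) d.
pose psi := (fun s : R => f (x + s *: d)) - cst (f x) - c0 \*: (@id R).
pose dpsi := fun s : R => dot (grad f (x + s *: d)) d - c0.
have dps : forall s : R, is_derive s 1 psi (dpsi s).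
  move=> s.
  have h1 := line_derive (@diff_derivable _ _ _ f _ d (df (x + s *: d))).
  have h2 : is_derive s (1:R) (c0 \*: (@id R)) (c0 *: 1).
    exact: is_deriveZ.
  have := is_deriveB (is_deriveB h1 (is_derive_cst (f x) s 1)) h2.
  move=> H; apply: is_derive_eq H _.
  by rewrite /dpsi Dgrad // subr0 /GRing.scale /= mulr1.
have bnd : forall s : R, 0 < s < 1 -> `|dpsi s| <= (L * esq d) * s.
  move=> s /andP[s0 s1].
  rewrite /dpsi /c0 -dotBl.
  apply: (le_trans (CS _ _)).
  apply: (@le_trans _ _ (L * enorm (x + s *: d - x) * enorm d)).
    by apply: ler_wpM2r; [exact: enorm_ge0 | exact: gl].
  rewrite addrC addKr enormZ (ger0_norm (ltW s0)) -enorm_sqr expr2.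
  nra.
have psi0 : psi 0 = 0.
  rewrite /psi !fctE scale0r addr0 subrr.
  by have -> : (c0 \*: (@id R)) 0 = c0 * 0 by []; rewrite mulr0 subr0.
have psi1 : psi 1 = f (x + d) - f x - c0.
  rewrite /psi !fctE scale1r. by have -> : (c0 \*: (@id R)) 1 = c0 * 1 by []; rewrite mulr1.
have u1 := quad_bound psi0 dps (fun s hs => le_trans (ler_norm _) (bnd s hs)).
have dps' : forall s : R, is_derive s 1 (- psi) (- dpsi s).
  by move=> s; exact: is_deriveN.
have npsi0 : (- psi) 0 = 0 by rewrite fctE psi0 oppr0.
have bnd' : forall s : R, 0 < s < 1 -> - dpsi s <= L * esq d * s.
  by move=> s hs; apply: le_trans (ler_norm _) _; rewrite normrN; exact: bnd.
have u2 := quad_bound npsi0 dps' bnd'.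
have u2' : - psi 1 <= L * esq d / 2 by exact: u2.
rewrite -psi1 ler_norml; apply/andP; split.
  by rewrite mulrAC lerNl.
by rewrite mulrAC.
Qed.
Definition fsq m n (A : 'M[R]_(m, n)) : R := \sum_i esq (row i A).
Definition ip m n (A B : 'M[R]_(m, n)) : R := \sum_i dot (row i A) (row i B).

Lemma fsq_ge0 m n (A : 'M[R]_(m, n)) : 0 <= fsq A.
Proof. by apply: sumr_ge0 => i _; exact: esq_ge0. Qed.

Lemma fnormE m n (A : 'M[R]_(m, n)) : fnorm A = Num.sqrt (fsq A).
Proof.
rewrite /fnorm /fsq /esq; congr Num.sqrt; apply: eq_bigr => i _.
by apply: eq_bigr => j _; rewrite mxE.
Qed.

Lemma ipE m n (A B : 'M[R]_(m, n)) : ip A B = \tr (A *m B^T).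
Proof.
rewrite /ip /mxtrace; apply: eq_bigr => i _; rewrite /dot mxE.
by apply: eq_bigr => j _; rewrite !mxE.
Qed.

Lemma ipAA m n (A : 'M[R]_(m, n)) : ip A A = fsq A.
Proof. by rewrite /ip /fsq; apply: eq_bigr => i _; apply: eq_bigr => j _; rewrite expr2. Qed.

Lemma ip_mull m n (S : 'M[R]_m) (A B : 'M[R]_(m, n)) : ip A (S *m B) = ip (S^T *m A) B.
Proof. by rewrite !ipE trmx_mul mulmxA mxtrace_mulC mulmxA. Qed.

Lemma ipZr m n (A B : 'M[R]_(m, n)) c : ip A (c *: B) = c * ip A B.
Proof. by rewrite !ipE linearZ /= -scalemxAr mxtraceZ. Qed.

Lemma fsqZ m n (A : 'M[R]_(m, n)) c : fsq (c *: A) = c ^+ 2 * fsq A.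
Proof. by rewrite /fsq mulr_sumr; apply: eq_bigr => i _; rewrite linearZ esqZ. Qed.

Lemma fsq_tr m n (A : 'M[R]_(m, n)) : fsq A^T = fsq A.
Proof.
rewrite /fsq /esq exchange_big /=; apply: eq_bigr => i _; apply: eq_bigr => j _.
by rewrite !mxE.
Qed.

Lemma esq_spec n (S : 'M[R]_n) (v : 'rV[R]_n) : esq (v *m S) <= specnorm S ^+ 2 * esq v.
Proof.
set E := [set enorm (w *m S) | w in [set w : 'rV[R]_n | enorm w <= 1]].
have hs : has_sup E.
  split.
    exists (enorm (0 *m S)); exists 0 => //=.
    by rewrite /enorm big1 ?sqrtr0 // => j _; rewrite mxE expr2 mulr0.
  exists (Num.sqrt (fsq S^T)) => _ [w /= hw <-].
  rewrite enormE; apply: ler_wsqrtr.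
  rewrite /fsq /esq; apply: ler_sum => j _.
  have -> : (w *m S) 0 j = dot w (row j S^T).
    by rewrite mxE /dot; apply: eq_bigr => i _; rewrite !mxE.
  apply: (le_trans (CS2 _ _)); rewrite -/(esq (row j S^T)).
  have : esq w <= 1 by rewrite -enorm_sqr; rewrite expr_le1 // enorm_ge0.
  have := esq_ge0 (row j S^T); have := esq_ge0 w; nra.
have ub : forall w : 'rV[R]_n, enorm w <= 1 -> enorm (w *m S) <= specnorm S.
  by move=> w hw; apply: sup_upper_bound => //; exists w.
have [v0|vn0] := eqVneq (esq v) 0.
  have v00 : v = 0.
    apply/rowP => j; rewrite mxE; apply/eqP; rewrite -sqrf_eq0; apply/eqP.
    by apply: (psumr_eq0P _ v0) => // k _; rewrite sqr_ge0.
  by rewrite v00 mul0mx /esq big1 ?mulr0 // => j _; rewrite mxE expr2 mulr0.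
have ep : 0 < enorm v by rewrite enormE sqrtr_gt0 lt_def vn0 esq_ge0.
set c := enorm v.
have h := ub (c^-1 *: v).
have ci : 0 <= c^-1 by rewrite invr_ge0 ltW.
rewrite enormZ (ger0_norm ci) mulVf ?gt_eqF // lexx in h.
have {}h := h isT.
rewrite -scalemxAl enormZ (ger0_norm ci) in h.
have h2 : enorm (v *m S) <= specnorm S * c.
  have cc : c * c^-1 = 1 by rewrite mulfV ?gt_eqF.
  by rewrite -[X in X <= _]mul1r -cc -mulrA [c * _]mulrC ler_pM2r.
rewrite -(enorm_sqr v) -(enorm_sqr (v *m S)) -/c; have e0 := enorm_ge0 (v *m S); nra.
Qed.

Lemma fsq_spec m n (S : 'M[R]_m) (X : 'M[R]_(m, n)) : S^T = S ->
  fsq (S *m X) <= specnorm S ^+ 2 * fsq X.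
Proof.
move=> sym; rewrite -fsq_tr -(fsq_tr X) trmx_mul sym /fsq mulr_sumr.
by apply: ler_sum => j _; rewrite row_mul esq_spec.
Qed.
Lemma f_lower n (f : 'rV[R]_n -> R) (L : R) :
  (forall p, differentiable f p) -> grad_lipschitz f L -> coercive f ->
  exists B, forall y, B <= f y.
Proof.
move=> df gl /(_ 0) [r hr].
set g0 := enorm (grad f 0).
exists (Num.min 0 (f 0 - g0 * `|r| - `|L| / 2 * r ^+ 2)) => y.
have [ry|yr] := leP r (enorm y).
  by rewrite ge_min (hr y ry).
rewrite ge_min; apply/orP; right.
have := (@descent n f L 0 y df gl); rewrite add0r ler_norml => /andP[h1 _].
have cs := CS (grad f 0) y; rewrite -/g0 ler_norml in cs; case/andP: cs => cs1 _.
have ey := enorm_ge0 y; have g00 : 0 <= g0 by exact: enorm_ge0.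
have e2 : esq y <= r ^+ 2.
  by rewrite -enorm_sqr; nra.
have rr : enorm y <= `|r| by apply: le_trans (ltW yr) (ler_norm _).
have LL : L <= `|L| := ler_norm L.
have es := esq_ge0 y.
have t1 : g0 * enorm y <= g0 * `|r| by exact: ler_wpM2l.
have t2 : L * esq y <= `|L| * r ^+ 2.
  apply: (@le_trans _ _ (`|L| * esq y)); first by apply: ler_wpM2r.
  by apply: ler_wpM2l => //; exact: normr_ge0.
lra.
Qed.
Lemma lap_col m (e : rel 'I_m) : undirected_graph e ->
  const_mx 1 *m laplacian R e = 0 :> 'rV_m.
Proof.
move=> [sym irr]; apply/rowP => j; rewrite !mxE.
under eq_bigr do rewrite !mxE mul1r.
rewrite (bigD1 j) //= eqxx.
rewrite (eq_bigr (fun i => - (e j i)%:R)); last first.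
  by move=> i /negbTE ->; rewrite sym.
rewrite sumrN.
have -> : \sum_(i < m | i != j) ((e j i)%:R : R) = \sum_i (e j i)%:R.
  by rewrite [in RHS](bigD1 j) //= irr add0r.
have -> : \sum_i ((e j i)%:R : R) = \sum_(i | e j i) 1.
  by rewrite [RHS]big_mkcond /=; apply: eq_bigr => i _; case: (e j i).
have -> : \sum_(i | e j i) (1:R) = \sum_(i in [set k | e j k]) 1.
  by apply: eq_bigl => i; apply/idP/idP; rewrite in_setE.
by rewrite sumr_const subrr.
Qed.
End S.

Theorem proposition2 (R : realType) (m n : nat) (hm : (2 <= m)%N) (hn : (1 <= n)%N)
  (f : 'I_m -> 'rV[R]_n -> R) (r : 'rV[R]_n) (e : rel 'I_m)
  (Lg LH : 'I_m -> R)
  (S : 'M[R]_m) (* the square root of the Laplacian *)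
  (Th0 : 'M[R]_(m, n)) (alpha : R) (theta : nat -> 'M[R]_(m, n)) :
  undirected_graph e ->
  (forall i, smooth (f i)) ->
  (forall i, grad_lipschitz (f i) (Lg i)) ->
  (forall i, hessian_lipschitz (f i) (LH i)) ->
  (forall i, coercive (f i)) ->
  connected_graph e ->
  S^T = S -> (forall v : 'rV[R]_m, 0 <= (v *m S *m v^T) 0 0) ->
  S *m S = laplacian R e ->
  block_sum Th0 = r ->
  0 < alpha ->
  alpha <= 1 / (specnorm S ^+ 2 * \big[Num.max/0]_(i < m) Lg i) ->
  theta 0%N = Th0 ->
  (forall k, theta k.+1 = theta k - alpha *: (laplacian R e *m stacked_grad f (theta k))) ->
  (forall k, block_sum (theta k) = r) /\
  (fun k => fnorm (S *m stacked_grad f (theta k))) @ \oo --> 0.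
Proof.
move=> hug hsm hgl _ hco _ hST _ hSS hTh0 ha0 hal hth0 hrec.
have df : forall i p, differentiable (f i) p by move=> i p; exact: (hsm i [::] p).
set Lmax := \big[Num.max/0]_(i < m) Lg i.
set s := specnorm S.
split.
  elim=> [|k IH]; first by rewrite hth0.
  rewrite hrec /block_sum mulmxBr -scalemxAr mulmxA lap_col // mul0mx scaler0 subr0.
  exact: IH.
pose FF (Th : 'M[R]_(m, n)) := \sum_i f i (row i Th).
pose a k := fsq (S *m stacked_grad f (theta k)).
have a_ge0 : forall k, 0 <= a k by move=> k; exact: fsq_ge0.
have Lm0 : 0 <= Lmax by exact: bigmax_ge_id.
have LgL : forall i, Lg i <= Lmax by move=> i; exact: le_bigmax.
have s2 : 0 <= s ^+ 2 by exact: sqr_ge0.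
have aP : alpha * (s ^+ 2 * Lmax) <= 1.
  have P0 : 0 <= s ^+ 2 * Lmax by exact: mulr_ge0.
  move: hal; have [->|Pn0] := eqVneq (s ^+ 2 * Lmax) 0.
    by rewrite invr0 mulr0 => h; move: (lt_le_trans ha0 h); rewrite ltxx.
  have Pp : 0 < s ^+ 2 * Lmax by rewrite lt_def Pn0 P0.
  by rewrite ler_pdivlMr.
have step : forall k, FF (theta k.+1) <= FF (theta k) - alpha / 2 * a k.
  move=> k.
  set Th := theta k; set G := stacked_grad f Th.
  set D := (- alpha) *: (S *m (S *m G)).
  have eT : theta k.+1 = Th + D.
    by rewrite hrec /D -hSS -mulmxA scaleNr.
  have rowG : forall i, grad (f i) (row i Th) = row i G.
    by move=> i; apply/rowP => j; rewrite !mxE.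
  have h1 : FF (theta k.+1) <= \sum_i (f i (row i Th) + dot (row i G) (row i D)
                                   + Lmax / 2 * esq (row i D)).
    rewrite /FF eT; apply: ler_sum => i _.
    have := @descent R n (f i) (Lg i) (row i Th) (row i D) (df i) (hgl i).
    rewrite ler_norml rowG linearD /= => /andP[_ h].
    have : Lg i / 2 * esq (row i D) <= Lmax / 2 * esq (row i D).
      by apply: ler_wpM2r; [exact: esq_ge0 | rewrite ler_pM2r // LgL].
    lra.
  have e1 : \sum_i dot (row i G) (row i D) = - alpha * a k.
    rewrite -/(ip G D) /D ipZr ip_mull hST ipAA //.
  have e2 : \sum_i (Lmax / 2 * esq (row i D)) = Lmax / 2 * (alpha ^+ 2 * fsq (S *m (S *m G))).
    by rewrite -mulr_sumr -/(fsq D) /D fsqZ sqrrN.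
  have e3 := fsq_spec (S *m G) hST; rewrite -/s -/(a k) in e3.
  move: h1; rewrite !big_split /= e1 e2 -/(FF Th) => h1.
  have t1 : Lmax * fsq (S *m (S *m G)) <= Lmax * (s ^+ 2 * a k) by exact: ler_wpM2l.
  have t2 : alpha * a k * (alpha * (s ^+ 2 * Lmax)) <= alpha * a k.
    by rewrite ler_piMr // mulr_ge0 // ltW.
  have t3 : 0 <= alpha ^+ 2 by exact: sqr_ge0.
  have t4 : alpha ^+ 2 * (Lmax * fsq (S *m (S *m G))) <= alpha ^+ 2 * (Lmax * (s ^+ 2 * a k)).
    exact: ler_wpM2l.
  nra.
have [B hB] : exists B, forall Th, B <= FF Th.
  have : forall i, exists B, forall y, B <= f i y.
    by move=> i; exact: (f_lower (df i) (hgl i) (hco i)).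
  case/choice => Bf hBf; exists (\sum_i Bf i) => Th.
  by apply: ler_sum => i _; exact: hBf.
have bnd : forall k, alpha / 2 * series a k <= FF (theta 0%N) - FF (theta k).
  elim=> [|k IH].
    by rewrite /series /= big_geq // mulr0 subrr.
  rewrite seriesSr mulrDr; have := step k; lra.
have cvs : cvgn (series a).
  apply: nondecreasing_is_cvgn.
    by apply/nondecreasing_seqP => k; rewrite seriesSr lerDl.
  exists ((FF (theta 0%N) - B) / (alpha / 2)) => _ [k _ <-].
  rewrite ler_pdivlMr ?divr_gt0 // mulrC.
  by apply: le_trans (bnd k) _; rewrite lerD2l lerN2.
have a0 := cvg_series_cvg_0 cvs.
have -> : (fun k => fnorm (S *m stacked_grad f (theta k))) = Num.sqrt \o a.
  by apply/funext => k; rewrite /= fnormE.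
rewrite -[X in _ --> X]sqrtr0.
exact: continuous_cvg (@sqrt_continuous R 0) a0.
Qed.
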